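(* There exist graphs $G$ and $H$ with the same dominated chromatic number for which $|St_{dom}(G)-St_{dom}(H)|$ is arbitrarily large; that is, for every positive integer $N$ there exist graphs $G,H$ with $\chi_{dom}(G)=\chi_{dom}(H)$ and $|St_{dom}(G)-St_{dom}(H)|\ge N$.
   Context: A dominated coloring of a graph is a proper coloring in which every color class is dominated by at least one vertex, i.e. for each color class $C$ there is a vertex adjacent to every vertex of $C$; $\chi_{dom}(G)$ is the minimum number of colors in a dominated coloring. The dom-stability $St_{dom}(G)$ is the minimum number of vertices of $G$ whose removal changes the dominated chromatic number of $G$. *)

(* Defs.v *)
From mathcomp Require Import all_boot.
Set Implicit Arguments. Unset Strict Implicit. Unset Printing Implicit Defensive.

Definition simple_graph (T : finType) (e : rel T) : Prop :=
  symmetric e /\ irreflexive e.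

(* c is a dominated coloring of the induced subgraph G[V] using colors < k:
   proper, and every (nonempty) color class is dominated by a vertex of G[V]
   adjacent to all vertices of the class. *)
Definition dom_coloring (T : finType) (e : rel T) (V : {set T}) (k : nat)
    (c : T -> nat) : Prop :=
  [/\ (forall x, x \in V -> c x < k),
      (forall x y, x \in V -> y \in V -> e x y -> c x <> c y)
    & (forall i, (exists x, x \in V /\ c x = i) ->
         exists y, y \in V /\ forall x, x \in V -> c x = i -> e y x)].

Definition is_chi_dom (T : finType) (e : rel T) (V : {set T}) (k : nat) : Prop :=
  (exists c, dom_coloring e V k c) /\
  (forall k' c, dom_coloring e V k' c -> k <= k').

(* St_dom(G) = s : minimum number of vertices whose removal changes chi_dom(G).
   (If G - S has no dominated coloring, chi_dom is considered changed.) *)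
Definition is_St_dom (T : finType) (e : rel T) (s : nat) : Prop :=
  exists k, is_chi_dom e setT k /\
    (exists S : {set T}, #|S| = s /\ ~ is_chi_dom e (~: S) k) /\
    (forall S : {set T}, ~ is_chi_dom e (~: S) k -> s <= #|S|).

(* Main.v *)
Require Import Defs.
From mathcomp Require Import all_boot.
Set Implicit Arguments. Unset Strict Implicit. Unset Printing Implicit Defensive.
From mathcomp Require Import zify.

Section KB.
Variable m : nat.
Definition kb : rel (bool * 'I_m) := fun x y => x.1 != y.1.

Lemma kb_simple : simple_graph kb.
Proof.
split; first by move=> x y; rewrite /kb eq_sym.
by move=> x; rewrite /kb eqxx.
Qed.

Lemma lower2 (V : {set bool * 'I_m}) k c x y : x \in V -> y \in V -> kb x y ->
  dom_coloring kb V k c -> 2 <= k.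
Proof.
move=> Hx Hy Hxy [Hk Hp _].
have := Hk x Hx; have := Hk y Hy; have := Hp x y Hx Hy Hxy. lia.
Qed.

Lemma good (V : {set bool * 'I_m}) i j : (true, i) \in V -> (false, j) \in V -> is_chi_dom kb V 2.
Proof.
move=> Hi Hj; split.
  exists (fun x => nat_of_bool x.1); split.
  - by move=> x _; case: x.1.
  - move=> [a ?] [b ?] _ _; rewrite /kb /=.
    by case: a; case: b.
  - move=> t [[a u] [Hx <-]] /=; clear Hx.
    exists (if a then (false, j) else (true, i)); split; first by case: a.
    move=> [b w] _ /=; rewrite /kb /=.
    by case: a; case: b.
move=> k' c Hc; exact: (lower2 Hi Hj (erefl true) Hc).
Qed.

Lemma side_in (S : {set bool * 'I_m}) b : #|S| < m -> exists i, (b, i) \in ~: S.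
Proof.
move=> HS.
case: (pickP (fun i : 'I_m => (b, i) \in ~: S)) => [i Hi|H0]; first by exists i.
exfalso.
have Hsub : [set (b, i) | i : 'I_m] \subset S.
  apply/subsetP => x /imsetP [i _ ->].
  by move: (H0 i); rewrite in_setC => /negbFE.
have := subset_leq_card Hsub.
rewrite card_imset; last by move=> p q [].
rewrite card_ord => H; by move: (leq_ltn_trans H HS); rewrite ltnn.
Qed.

Lemma St_kb : 0 < m -> is_St_dom kb m.
Proof.
move=> Hm.
exists 2; split.
  by apply: (@good _ (Ordinal Hm) (Ordinal Hm)); rewrite in_setT.
split.
  exists [set (true, i) | i : 'I_m]; split.
    by rewrite card_imset ?card_ord // => p q [].
  move=> [[c [_ _ Hd]] _].
  have Hx : (false, Ordinal Hm) \in ~: [set (true, i) | i : 'I_m].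
    rewrite in_setC; apply/negP => /imsetP [i _ []] //.
  have [y [Hy Hyx]] := Hd _ (ex_intro _ _ (conj Hx erefl)).
  move: (Hyx _ Hx erefl); clear Hyx.
  move: Hy; case: y => [[] w] Hy; rewrite /kb //=.
  by rewrite in_setC (imset_f (fun i : 'I_m => (true, i))) in Hy.
move=> S HS; rewrite leqNgt; apply/negP => Hlt; apply: HS.
have [i Hi] := side_in true Hlt.
have [j Hj] := side_in false Hlt.
exact: good Hi Hj.
Qed.

Lemma chi_kb : 0 < m -> is_chi_dom kb setT 2.
Proof. by move=> Hm; apply: (@good _ (Ordinal Hm) (Ordinal Hm)); rewrite in_setT. Qed.
End KB.

Theorem mainTheorem11 : forall N : nat, 0 < N ->
  exists (T1 T2 : finType) (e1 : rel T1) (e2 : rel T2) (k s1 s2 : nat),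
    simple_graph e1 /\ simple_graph e2 /\
    is_chi_dom e1 setT k /\ is_chi_dom e2 setT k /\
    is_St_dom e1 s1 /\ is_St_dom e2 s2 /\
    ((N + s2 <= s1) \/ (N + s1 <= s2)).
Proof.
move=> N _.
exists (bool * 'I_N.+1)%type, (bool * 'I_1)%type.
exists (@kb N.+1), (@kb 1), 2, N.+1, 1.
split; first exact: kb_simple.
split; first exact: kb_simple.
split; first exact: chi_kb.
split; first exact: chi_kb.
split; first exact: St_kb.
split; first exact: St_kb.
by left; rewrite addn1.
Qed.
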